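(* Let $P$ be a 6-stack and let $Q\subseteq P$ be a subset which, with the induced order, is isomorphic to a tower of sections. If $i\ge0$ is an integer with $P(i)\subseteq Q$ but $P(i+1)\not\subseteq Q$, then $P(i+1)\cap Q=\emptyset$.
   Context: All posets are finite. For a poset $P$ and $p\in P$, the rank $r(p)$ of $p$ is the largest $m$ such that there is a chain $p_0<\dots<p_m=p$ in $P$. $P$ is ranked of rank $r(P)$ if every maximal chain has exactly $r(P)+1$ elements. For $0\le i\le j$, $P(i,j)=\{p\in P:i\le r(p)\le j\}$, $P(i)=P(i,i)$ (induced order). The 6-crown $C_6$ is the poset on $\{x_0,x_1,x_2,y_0,y_1,y_2\}$ whose only strict comparabilities are $x_0<y_0>x_1<y_1>x_2<y_2>x_0$. A 6-stack is a ranked poset $P$ of rank $n\ge1$ such that $P(i,i+1)\cong C_6$ for each $0\le i<n$. The ordinal sum of posets $P_1,\dots,P_k$ ($k\ge1$) is their disjoint union ordered by the orders of the $P_i$ together with $p<q$ whenever $p\in P_i,q\in P_j,i<j$. A section is either a two-element antichain or a poset on the set $\{[i,k]: 0\le i\le 2,\ 0\le k\le n\}$ (with $3(n+1)$ distinct elements), for some $n\ge 1$, such that: (1) $[i,k]<[i,l]$ whenever $0\le k<l\le n$; (2) for each $k$, $\{[0,k],[1,k],[2,k]\}$ is an antichain; (3) $[i,k]<[j,l]$ implies $[i+1,k]<[j+1,l]$ (first indices mod $3$); (4) for each $0\le k<n$ there are $i,j$ with $[i,k]\not<[j,k+1]$. A tower of sections is an ordinal sum of one or more sections. *)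

(* Defs.v *)
From mathcomp Require Import all_boot.
Set Implicit Arguments. Unset Strict Implicit. Unset Printing Implicit Defensive.

Record finPoset := FinPoset { car : finType; ltp : rel car }.
Arguments ltp : clear implicits.

Definition is_poset (S : finPoset) : Prop :=
  irreflexive (ltp S) /\ transitive (ltp S).

Definition sub_iso (T : finType) (lt : rel T) (A : T -> Prop) (S : finPoset) : Prop :=
  exists f : car S -> T,
    injective f /\ (forall x, A x <-> exists y, f y = x) /\
    (forall a b, ltp S a b = lt (f a) (f b)).

(* [rank_is lt p m]: m is the largest number such that there is a chain
   p_0 < ... < p_m = p  (the chain is x0 :: s). *)
Definition rank_is (T : finType) (lt : rel T) (p : T) (m : nat) : Prop :=
  (exists (x0 : T) (s : seq T), size s = m /\ path lt x0 s /\ last x0 s = p) /\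
  (forall (x0 : T) (s : seq T), path lt x0 s -> last x0 s = p -> size s <= m).

Definition Pij (T : finType) (lt : rel T) (i j : nat) (p : T) : Prop :=
  exists m, rank_is lt p m /\ i <= m <= j.

Definition is_chain (T : finType) (lt : rel T) (C : {set T}) : Prop :=
  forall x y, x \in C -> y \in C -> x != y -> lt x y || lt y x.

Definition maximal_chain (T : finType) (lt : rel T) (C : {set T}) : Prop :=
  is_chain lt C /\ forall D : {set T}, is_chain lt D -> C \subset D -> D = C.

Definition ranked_of_rank (T : finType) (lt : rel T) (n : nat) : Prop :=
  forall C : {set T}, maximal_chain lt C -> #|C| = n.+1.

(* The 6-crown C_6: x_i = (false, i), y_i = (true, i). *)
Definition c6x (i : nat) : bool * 'I_3 := (false, inord i).
Definition c6y (i : nat) : bool * 'I_3 := (true, inord i).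
Definition c6lt (a b : bool * 'I_3) : bool :=
  (a, b) \in [:: (c6x 0, c6y 0); (c6x 1, c6y 0); (c6x 1, c6y 1);
                 (c6x 2, c6y 1); (c6x 2, c6y 2); (c6x 0, c6y 2)].
Definition C6 : finPoset := @FinPoset ((bool * 'I_3)%type : finType) c6lt.

Definition six_stack (T : finType) (lt : rel T) : Prop :=
  exists n, 1 <= n /\ ranked_of_rank lt n /\
    forall i, i < n -> sub_iso lt (Pij lt i i.+1) C6.

Definition s3 (i : 'I_3) : 'I_3 := inord ((i + 1) %% 3).

(* A section: a two-element antichain, or a poset on
   {[i,k] : 0 <= i <= 2, 0 <= k <= n} (n >= 1, 3(n+1) distinct elements,
   labelled by the bijection f) satisfying (1)-(4). *)
Definition is_section (S : finPoset) : Prop :=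
  is_poset S /\
  ( (#|car S| = 2 /\ forall x y : car S, ~~ ltp S x y)
  \/ exists n : nat, 1 <= n /\
     exists f : 'I_3 * 'I_n.+1 -> car S, bijective f /\
       (forall (i : 'I_3) (k l : 'I_n.+1), k < l -> ltp S (f (i, k)) (f (i, l))) /\
       (forall (i j : 'I_3) (k : 'I_n.+1), ~~ ltp S (f (i, k)) (f (j, k))) /\
       (forall (i j : 'I_3) (k l : 'I_n.+1),
                    ltp S (f (i, k)) (f (j, l)) -> ltp S (f (s3 i, k)) (f (s3 j, l))) /\
       (forall k : nat, k < n -> exists i j : 'I_3,
                    ~~ ltp S (f (i, inord k)) (f (j, inord k.+1)))).

Definition fp_default : finPoset := @FinPoset (void : finType) (fun _ _ => false).

Definition ordsum_car (l : seq finPoset) : finType :=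
  ({j : 'I_(size l) & car (nth fp_default l j)} : finType).
Definition ordsum_lt (l : seq finPoset) (u v : ordsum_car l) : bool :=
  (tag u < tag v) || ((tag u == tag v) && ltp _ (tagged u) (tagged_as u v)).
Definition ordsum (l : seq finPoset) : finPoset := @FinPoset (ordsum_car l) (@ordsum_lt l).

Definition iso_tower (T : finType) (lt : rel T) (Q : {set T}) : Prop :=
  exists l : seq finPoset, 0 < size l /\
    (forall j, j < size l -> is_section (nth fp_default l j)) /\
    sub_iso lt (fun x => x \in Q) (ordsum l).

(* Main.v *)
Require Import Defs.
From mathcomp Require Import all_boot zify.
From Stdlib Require Import Classical Lia.
Set Implicit Arguments. Unset Strict Implicit. Unset Printing Implicit Defensive.

Lemma ex_max (P : nat -> Prop) B : P 0 -> (forall n, P n -> n <= B) ->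
  exists m, P m /\ forall n, P n -> n <= m.
Proof.
move=> P0 HB.
suff H : forall k m, P m -> B - m <= k -> exists m', P m' /\ forall n, P n -> n <= m'.
  by apply: (H B 0) => //; rewrite subn0.
elim=> [|k IH] m Pm Hk.
  exists m; split => // n Pn; have := HB _ Pn; lia.
case: (classic (exists n, P n /\ m < n)) => [[n [Pn mn]]|nex].
  apply: (IH n Pn); have := HB _ Pn; lia.
exists m; split => // n Pn; rewrite leqNgt; apply/negP => mn; apply: nex; by exists n.
Qed.

Section R.
End R.

Lemma path_uniq (T : finType) (lt : rel T) : irreflexive lt -> transitive lt ->
  forall x0 s, path lt x0 s -> uniq (x0 :: s).
Proof. move=> irr tr x0 s h; exact: (sorted_uniq tr irr). Qed.

Lemma path_size (T : finType) (lt : rel T) : irreflexive lt -> transitive lt ->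
  forall x0 s, path lt x0 s -> size s < #|T|.
Proof.
move=> irr tr x0 s h; have /card_uniqP := path_uniq irr tr h.
by move=> h2; rewrite -[_ < _]/(size (x0::s) <= #|T|) -h2; exact: max_card.
Qed.

Lemma rank_ex (T : finType) (lt : rel T) : irreflexive lt -> transitive lt ->
  forall p, exists m, rank_is lt p m.
Proof.
move=> irr tr p.
have [m [Pm Hm]] : exists m, (exists x0 s, size s = m /\ path lt x0 s /\ last x0 s = p) /\
   forall n, (exists x0 s, size s = n /\ path lt x0 s /\ last x0 s = p) -> n <= m.
  apply: (ex_max (B := #|T|)); first by exists p, [::].
  move=> n [x0 [s [<- [h _]]]]; exact: ltnW (path_size irr tr h).
exists m; split => // x0 s h l; apply: Hm; by exists x0, s.
Qed.

Lemma rank_uniq (T : finType) (lt : rel T) p m m' :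
  rank_is lt p m -> rank_is lt p m' -> m = m'.
Proof.
move=> [[x0 [s [<- [h1 h2]]]] H1] [[y0 [t [<- [h3 h4]]]] H2].
by apply/eqP; rewrite eqn_leq (H2 _ _ h1 h2) (H1 _ _ h3 h4).
Qed.

Lemma rank_lt (T : finType) (lt : rel T) x y a b :
  rank_is lt x a -> rank_is lt y b -> lt x y -> a < b.
Proof.
move=> [[x0 [s [<- [h1 h2]]]] _] [_ H] xy.
have := H x0 (rcons s y); rewrite size_rcons last_rcons rcons_path h1 h2 xy.
by apply.
Qed.

Lemma pairwise_chain (T : finType) (lt : rel T) (l : seq T) : pairwise lt l ->
  forall x y, x \in l -> y \in l -> x != y -> lt x y || lt y x.
Proof.
elim: l => [//|z l IH]; rewrite pairwise_cons => /andP [/allP Hz Hl] x y.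
rewrite !in_cons => /orP [/eqP ->|xl] /orP [/eqP ->|yl]; rewrite ?eqxx //.
- by move=> _; rewrite Hz.
- by move=> _; rewrite (Hz _ xl) orbT.
- exact: IH.
Qed.

Lemma rank_le (T : finType) (lt : rel T) : irreflexive lt -> transitive lt ->
  forall n, ranked_of_rank lt n -> forall z r, rank_is lt z r -> r <= n.
Proof.
move=> irr tr n Hn z r [[x0 [s [<- [h _]]]] _].
pose chainb (D : {set T}) := [forall x, forall y, [&& x \in D, y \in D & x != y] ==> lt x y || lt y x].
have chP D : reflect (is_chain lt D) (chainb D).
  apply: (iffP forallP) => [H x y xD yD xy|H x]; last first.
    apply/forallP => y; apply/implyP => /and3P [xD yD xy]; exact: H.
  by have /forallP /(_ y) /implyP := H x; apply; rewrite xD yD.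
pose C := [set x | x \in x0 :: s].
have Cch : chainb C.
  apply/chP => x y; rewrite !in_set; apply: pairwise_chain.
  by rewrite -sorted_pairwise.
have HC : chainb C && (C \subset C) by rewrite Cch subxx.
case: (@arg_maxnP _ C (fun D : {set T} => chainb D && (C \subset D)) (fun D : {set T} => #|D|) HC) => D /andP [Dch CD] Dmax.
have Dm : maximal_chain lt D.
  split; first exact/chP.
  move=> D' /chP D'ch DD'; apply/eqP; rewrite eq_sym eqEcard DD' /=.
  by apply: Dmax; rewrite D'ch (subset_trans CD DD').
have := Hn _ Dm; have := subset_leq_card CD.
have -> : #|C| = size (x0 :: s).
  rewrite -(card_uniqP (path_uniq irr tr h)); apply: eq_card => x; by rewrite inE.
by move=> le HD; rewrite HD in le.
Qed.
Lemma io (x : 'I_3) k : k < 3 -> (x == inord k) = (val x == k).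
Proof. by move=> hk; rewrite -val_eqE; congr (_ == _); apply: inordK. Qed.
Lemma c6ltE (u v : bool * 'I_3) :
  c6lt u v = [&& ~~ u.1, v.1 & (val u.2 == val v.2) || (val u.2 == (val v.2).+1 %% 3)].
Proof.
case: u v => [b1 a] [b2 t].
rewrite /c6lt /c6x /c6y !in_cons in_nil orbF !xpair_eqE !io //=.
case: b1; case: b2 => //=; rewrite ?andbF //.
by case: a => [[|[|[|m]]] Hm] //; case: t => [[|[|[|k]]] Hk].
Qed.
Lemma s3E (a : 'I_3) : val (s3 a) = (val a).+1 %% 3.
Proof. rewrite -[(val a).+1]addn1; apply: inordK; exact: ltn_pmod. Qed.
Lemma c6_cover (s t1 t2 : 'I_3) : t1 != t2 ->
  c6lt (false,s) (true,t1) || c6lt (false,s) (true,t2).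
Proof.
rewrite !c6ltE /= -val_eqE.
by case: s => [[|[|[|m]]] Hm]; case: t1 => [[|[|[|k]]] Hk]; case: t2 => [[|[|[|j]]] Hj].
Qed.
Ltac ocase x := case: x => [[|[|[|?]]] ?] //.
Lemma c6_self (a : 'I_3) : c6lt (false,a) (true,a).
Proof. by rewrite c6ltE /= eqxx. Qed.
Lemma c6_two (t : 'I_3) : exists u1 u2 : 'I_3, u1 != u2 /\ c6lt (false,u1) (true,t) /\ c6lt (false,u2) (true,t).
Proof.
exists t, (s3 t); rewrite !c6ltE /= -val_eqE !s3E; by ocase t; do !split.
Qed.
Lemma c6_miss (t : 'I_3) : exists s : 'I_3, ~~ c6lt (false,s) (true,t).
Proof. exists (s3 (s3 t)); rewrite c6ltE /= !s3E; by ocase t. Qed.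
Lemma c6_miss1 (t s1 s2 : 'I_3) : ~~ c6lt (false,s1) (true,t) -> ~~ c6lt (false,s2) (true,t) -> s1 = s2.
Proof.
rewrite !c6ltE /= => h1 h2; apply/eqP; rewrite -val_eqE; move: h1 h2.
by ocase t; ocase s1; ocase s2.
Qed.
Lemma c6_miss2 (s t1 t2 : 'I_3) : ~~ c6lt (false,s) (true,t1) -> ~~ c6lt (false,s) (true,t2) -> t1 = t2.
Proof.
rewrite !c6ltE /= => h1 h2; apply/eqP; rewrite -val_eqE; move: h1 h2.
by ocase t1; ocase s; ocase t2.
Qed.
Lemma s3_3 (a : 'I_3) : s3 (s3 (s3 a)) = a.
Proof. apply/eqP; rewrite -val_eqE !s3E; by ocase a. Qed.
Lemma cov3 (a b c d : 'I_3) : a != b -> a != c -> b != c -> [\/ d = a, d = b | d = c].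
Proof.
rewrite -!val_eqE => h1 h2 h3.
have e : forall x y : 'I_3, (val x == val y) -> x = y by move=> x y /eqP /val_inj.
suff : [|| val d == val a, val d == val b | val d == val c].
  by case/or3P => /e ->; [apply: Or31|apply: Or32|apply: Or33].
by move: h1 h2 h3; ocase a; ocase b; ocase c; ocase d.
Qed.
Lemma cov3s (a d : 'I_3) : [\/ a = d, a = s3 d | a = s3 (s3 d)].
Proof.
have e : forall x y : 'I_3, (val x == val y) -> x = y by move=> x y /eqP /val_inj.
suff : [|| val a == val d, val a == val (s3 d) | val a == val (s3 (s3 d))].
  by case/or3P => /e ->; [apply: Or31|apply: Or32|apply: Or33].
rewrite !s3E; by ocase a; ocase d.
Qed.

Lemma rk_lt (T : finType) (lt : rel T) (rk : T -> nat) (Hrk : forall x, rank_is lt x (rk x)) x y :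
  lt x y -> rk x < rk y.
Proof. exact: rank_lt (Hrk x) (Hrk y). Qed.

Lemma PijE (T : finType) (lt : rel T) (rk : T -> nat) (Hrk : forall x, rank_is lt x (rk x)) a b x :
  Pij lt a b x <-> a <= rk x <= b.
Proof.
split; first by case=> m [hm]; rewrite (rank_uniq hm (Hrk x)).
by move=> h; exists (rk x).
Qed.

Lemma crown (T : finType) (lt : rel T) (rk : T -> nat) (Hrk : forall x, rank_is lt x (rk x)) j :
  sub_iso lt (Pij lt j j.+1) C6 ->
  exists g : bool * 'I_3 -> T, injective g /\ (forall u v, lt (g u) (g v) = c6lt u v) /\
    (forall c, rk (g (false,c)) = j) /\ (forall c, rk (g (true,c)) = j.+1) /\
    (forall x, rk x = j -> exists c, x = g (false,c)) /\
    (forall x, rk x = j.+1 -> exists c, x = g (true,c)).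
Proof.
move=> [g0 [ginj0 [gP0 glt0]]].
pose g : bool * 'I_3 -> T := g0.
have ginj : injective g by [].
have glt u v : lt (g u) (g v) = c6lt u v by rewrite /g -glt0.
have gP x : Pij lt j j.+1 x -> exists b (c : 'I_3), x = g (b,c).
  by move/gP0 => [[b c] <-]; exists b, c.
have Pg u : j <= rk (g u) <= j.+1 by apply/(PijE Hrk); apply/gP0; exists u.
have key p q : j <= p <= j.+1 -> j <= q <= j.+1 -> p < q -> p = j /\ q = j.+1 by lia.
have Hc c : rk (g (false,c)) = j /\ rk (g (true,c)) = j.+1.
  apply: key (Pg (false,c)) (Pg (true,c)) _; apply: (rk_lt Hrk).
  by rewrite glt c6_self.
exists g; split => //; split => //.
split; first by move=> c; case: (Hc c).
split; first by move=> c; case: (Hc c).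
split.
  move=> x hx; have : Pij lt j j.+1 x by apply/(PijE Hrk); rewrite hx leqnn leqnSn.
  move/gP => [[] [c xe]]; subst x; last by exists c.
  by move: hx; case: (Hc c) => _ ->; lia.
move=> x hx; have : Pij lt j j.+1 x by apply/(PijE Hrk); rewrite hx leqnn leqnSn.
move/gP => [[] [c xe]]; subst x; first by exists c.
by move: hx; case: (Hc c) => -> _; lia.
Qed.

Lemma far (T : finType) (lt : rel T) (tr : transitive lt) (rk : T -> nat)
  (Hrk : forall x, rank_is lt x (rk x)) n (Hle : forall x, rk x <= n)
  (Hcr : forall j, j < n -> sub_iso lt (Pij lt j j.+1) C6) :
  forall b x z, rk z = b -> rk x + 2 <= rk z -> lt x z.
Proof.
elim=> [|b IH] x z hz hxz; first by move: hxz; rewrite hz; lia.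
have bn : b < n by rewrite -hz Hle.
have [g [ginj [glt [gF [gT [gF' gT']]]]]] := crown Hrk (Hcr _ bn).
have [t ->] := gT' z hz.
have [u1 [u2 [u12 [h1 h2]]]] := c6_two t.
have [e|ne] := eqVneq (rk x).+1 b.
  have xn : rk x < n by rewrite (leq_trans _ (ltnW bn)) // -e.
  have [h [hinj [hlt [hF [hT [hF' hT']]]]]] := crown Hrk (Hcr _ xn).
  have [s xs] := hF' x erefl.
  have [t1 e1] : exists t1, g (false,u1) = h (true,t1) by apply: hT'; rewrite gF e.
  have [t2 e2] : exists t2, g (false,u2) = h (true,t2) by apply: hT'; rewrite gF e.
  have t12 : t1 != t2.
    apply: contraNneq u12 => et.
    have : g (false,u1) = g (false,u2) by rewrite e1 e2 et.
    by move/ginj => [->].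
  have := c6_cover s t12; rewrite -!hlt -e1 -e2 xs => /orP [] hw.
    by apply: tr hw _; rewrite glt.
  by apply: tr hw _; rewrite glt.
have hb : rk x + 2 <= b by move: hxz; rewrite hz; move: ne => /eqP; lia.
apply: (tr (g (false,u1))); last by rewrite glt.
by apply: (IH _ _ (gF u1)); rewrite gF.
Qed.
Lemma core (T : finType) (lt : rel T) (irr : irreflexive lt) (tr : transitive lt)
  (rk : T -> nat) (i N : nat) (E : 'I_3 * 'I_N.+1 -> T) (Einj : injective E)
  (E1 : forall a (k l : 'I_N.+1), k < l -> lt (E (a,k)) (E (a,l)))
  (E2 : forall a b k, ~~ lt (E (a,k)) (E (b,k)))
  (E3 : forall a b k l, lt (E (a,k)) (E (b,l)) -> lt (E (s3 a,k)) (E (s3 b,l)))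
  (Hrk : forall x y, lt x y -> rk x < rk y)
  (Hfar : forall x z, rk x + 2 <= rk z -> lt x z)
  (Hmiss : forall z, rk z = i.+1 -> exists w, rk w = i /\ ~~ lt w z)
  (Hbelow : forall z, rk z = i.+1 -> exists w, rk w = i /\ lt w z)
  (Hmiss1 : forall z w1 w2, rk z = i.+1 -> rk w1 = i -> rk w2 = i ->
      ~~ lt w1 z -> ~~ lt w2 z -> w1 = w2)
  (Hmiss2 : forall z z' w, rk z = i.+1 -> rk z' = i.+1 -> rk w = i ->
      ~~ lt w z -> ~~ lt w z' -> z = z')
  (a0 a1 a2 : 'I_3) (k0 k1 k2 : 'I_N.+1)
  (h01 : E (a0,k0) != E (a1,k1)) (h02 : E (a0,k0) != E (a2,k2)) (h12 : E (a1,k1) != E (a2,k2))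
  (r0 : rk (E (a0,k0)) = i) (r1 : rk (E (a1,k1)) = i) (r2 : rk (E (a2,k2)) = i)
  (Hx : forall w, rk w = i -> [\/ w = E (a0,k0), w = E (a1,k1) | w = E (a2,k2)])
  (q : 'I_3 * 'I_N.+1) (rq : rk (E q) = i.+1) :
  exists K, forall a, rk (E (a,K)) = i.+1.
Proof.
have lev a b (k l : 'I_N.+1) : lt (E (a,k)) (E (b,l)) -> k < l.
  case: (ltngtP k l) => // [lk|e] h.
    by have := E2 a b k; rewrite (tr _ _ _ h (E1 b _ _ lk)).
  by move: h; rewrite (val_inj e) => h; have := E2 a b l; rewrite h.
have inv3 a b k l : lt (E (s3 a,k)) (E (s3 b,l)) -> lt (E (a,k)) (E (b,l)).
  by move/E3/E3; rewrite !s3_3.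
have chr a (k l : 'I_N.+1) : rk (E (a,k)) = rk (E (a,l)) -> k = l.
  case: (ltngtP k l) => [kl|lk|/val_inj //] e.
    by have := Hrk _ _ (E1 a _ _ kl); rewrite e ltnn.
  by have := Hrk _ _ (E1 a _ _ lk); rewrite e ltnn.
have rank_up y z w : rk y = i -> lt y z -> rk w = i -> ~~ lt w z -> rk z = i.+1.
  move=> ry yz rw wz; have := Hrk _ _ yz; rewrite ry => iz.
  apply/eqP; rewrite eqn_leq iz andbT leqNgt; apply/negP => zi.
  have wz2 : lt w z by apply: Hfar; rewrite rw addn2.
  by rewrite wz2 in wz.
have LP a b c (k l m : 'I_N.+1) : a != b -> c != a -> c != b -> k < l ->
    rk (E (a,k)) = i -> rk (E (b,l)) = i -> rk (E (c,m)) = i -> False.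
  move=> ab ca cb kl ra rb rc.
  have rz : rk (E (a,l)) = i.+1 by apply: (rank_up _ _ _ ra (E1 a _ _ kl) rb (E2 b a l)).
  have cz : lt (E (c,m)) (E (a,l)).
    case/boolP: (lt (E (c,m)) (E (a,l))) => // ncz.
    have := Hmiss1 _ _ _ rz rb rc (E2 b a l) ncz; move/Einj => [] eb _.
    by move: cb; rewrite eb eqxx.
  have ml := lev _ _ _ _ cz.
  have rz' : rk (E (c,l)) = i.+1 by apply: (rank_up _ _ _ rc (E1 c _ _ ml) rb (E2 b c l)).
  have := Hmiss2 _ _ _ rz rz' rb (E2 b a l) (E2 b c l); move/Einj => [] ea.
  by move: ca; rewrite ea eqxx.
have nsym (x y : 'I_3) : x != y -> y != x by rewrite eq_sym.
have d01 : a0 != a1.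
  apply: contraNneq h01 => e; move: r1; rewrite -e -r0 => /chr ->; by [].
have d02 : a0 != a2.
  apply: contraNneq h02 => e; move: r2; rewrite -e -r0 => /chr ->; by [].
have d12 : a1 != a2.
  apply: contraNneq h12 => e; move: r2; rewrite -e -r1 => /chr ->; by [].
have e01 : k1 = k0.
  case: (ltngtP k0 k1) => [kl|lk|/val_inj //].
    by case: (LP a0 a1 a2 k0 k1 k2 d01 (nsym _ _ d02) (nsym _ _ d12) kl r0 r1 r2).
  by case: (LP a1 a0 a2 k1 k0 k2 (nsym _ _ d01) (nsym _ _ d12) (nsym _ _ d02) lk r1 r0 r2).
have e02 : k2 = k0.
  case: (ltngtP k0 k2) => [kl|lk|/val_inj //].
    by case: (LP a0 a2 a1 k0 k2 k1 d02 (nsym _ _ d01) d12 kl r0 r2 r1).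
  by case: (LP a2 a0 a1 k2 k0 k1 (nsym _ _ d02) d12 (nsym _ _ d01) lk r2 r0 r1).
subst k1 k2.
have rall d : rk (E (d,k0)) = i by case: (cov3 d d01 d02 d12) => ->.
have hw w : rk w = i -> exists a', w = E (a',k0).
  by move/Hx => [] ->; eexists.
case: q rq => d mu rq.
exists mu.
have [w [rw wq]] := Hbelow _ rq.
have [a' ew] := hw w rw; rewrite ew in wq.
have k0mu := lev _ _ _ _ wq.
have [w' [rw' wq']] := Hmiss _ rq.
have [b ew'] := hw w' rw'; rewrite ew' in wq'.
have nb1 : ~~ lt (E (s3 b,k0)) (E (s3 d,mu)) by apply: contra wq'; apply: inv3.
have nb2 : ~~ lt (E (s3 (s3 b),k0)) (E (s3 (s3 d),mu)) by apply: contra nb1; apply: inv3.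
move=> a; case: (cov3s a d) => ->.
- exact: rank_up _ _ _ (rall d) (E1 d _ _ k0mu) (rall b) wq'.
- exact: rank_up _ _ _ (rall (s3 d)) (E1 _ _ _ k0mu) (rall _) nb1.
- exact: rank_up _ _ _ (rall _) (E1 _ _ _ k0mu) (rall _) nb2.
Qed.

Lemma s3_dist (c : 'I_3) : [&& c != s3 c, c != s3 (s3 c) & s3 c != s3 (s3 c)].
Proof. rewrite -!val_eqE !s3E; by ocase c. Qed.

Lemma same_tag (l : seq finPoset) (J : 'I_(size l)) (u : ordsum_car l) :
  tag u = J -> exists s : car (nth fp_default l J), u = Tagged (fun j : 'I_(size l) => car (nth fp_default l j)) s.
Proof. by case: u => J' s /= e; subst J'; exists s. Qed.

Theorem lemma5p2 (T : finType) (lt : rel T)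
  (lt_irr : irreflexive lt) (lt_trans : transitive lt)
  (Hstack : six_stack lt) (Q : {set T}) (HQ : iso_tower lt Q) (i : nat)
  (Hi : forall p, Pij lt i i p -> p \in Q)
  (Hi1 : ~ (forall p, Pij lt i.+1 i.+1 p -> p \in Q)) :
  forall p, Pij lt i.+1 i.+1 p -> p \notin Q.
Proof.
have [rk Hrk] : exists rk : T -> nat, forall x, rank_is lt x (rk x).
  by apply: fin_all_exists; exact: rank_ex.
case: Hstack => n [n1 [Hran Hcr]].
have Hle x : rk x <= n := rank_le lt_irr lt_trans Hran (Hrk x).
have Hrklt x y : lt x y -> rk x < rk y := rk_lt Hrk (x := x) (y := y).
have Hfar x z : rk x + 2 <= rk z -> lt x z := far lt_trans Hrk Hle Hcr erefl.
have inQ w : rk w = i -> w \in Q.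
  by move=> h; apply: Hi; apply/(PijE Hrk); rewrite h leqnn.
move=> p /(PijE Hrk) Pp; apply/negP => pQ; apply: Hi1 => q /(PijE Hrk) Pq.
have rp : rk p = i.+1 by move: Pp => /andP[]; lia.
have rq : rk q = i.+1 by move: Pq => /andP[]; lia.
have i_n : i < n by rewrite -rp; exact: Hle.
have [g [ginj [glt [gF [gT [gF' gT']]]]]] := crown Hrk (Hcr _ i_n).
have Hmiss z : rk z = i.+1 -> exists w, rk w = i /\ ~~ lt w z.
  move/gT' => [t ->]; have [s hs] := c6_miss t.
  by exists (g (false,s)); rewrite gF glt.
have Hbelow z : rk z = i.+1 -> exists w, rk w = i /\ lt w z.
  move/gT' => [t ->]; by exists (g (false,t)); rewrite gF glt c6_self.
have Hmiss1 z w1 w2 : rk z = i.+1 -> rk w1 = i -> rk w2 = i ->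
    ~~ lt w1 z -> ~~ lt w2 z -> w1 = w2.
  move=> /gT' [t ->] /gF' [s1 ->] /gF' [s2 ->]; rewrite !glt => h1 h2.
  by rewrite (c6_miss1 h1 h2).
have Hmiss2 z z' w : rk z = i.+1 -> rk z' = i.+1 -> rk w = i ->
    ~~ lt w z -> ~~ lt w z' -> z = z'.
  move=> /gT' [t ->] /gT' [t' ->] /gF' [s ->]; rewrite !glt => h1 h2.
  by rewrite (c6_miss2 h1 h2).
case: HQ => l [lpos [Hsec [F [Finj [FQ Flt]]]]].
have tagE u v : ~~ lt (F u) (F v) -> ~~ lt (F v) (F u) -> tag u = tag v.
  rewrite -!Flt /= /ordsum_lt.
  by case: (ltngtP (tag u) (tag v)) => [//|//|/val_inj].
have preF w : w \in Q -> exists u, F u = w by move/FQ.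
have sameR u v : rk (F u) = i -> rk (F v) = i -> tag u = tag v.
  move=> ru rv; apply: tagE; apply/negP => /Hrklt; by rewrite ru rv ltnn.
pose c0 : 'I_3 := ord0.
have [u0 eu0] := preF _ (inQ _ (gF c0)).
pose J := tag u0.
pose S := nth fp_default l J.
pose G (s : car S) : T := F (Tagged (fun j : 'I_(size l) => car (nth fp_default l j)) s).
have Glt s s' : lt (G s) (G s') = ltp S s s'.
  by rewrite /G -Flt /= /ordsum_lt /= ltnn eqxx /= tagged_asE.
have Ginj : injective G.
  move=> s s' /Finj e.
  have := @tagged_asE _ (fun j : 'I_(size l) => car (nth fp_default l j)) (Tagged (fun j : 'I_(size l) => car (nth fp_default l j)) s) s'.
  by rewrite -e tagged_asE.
have GQ s : G s \in Q by apply/FQ; eexists.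
have rankiG w : rk w = i -> exists s, w = G s.
  move=> rw; have [u eu] := preF _ (inQ _ rw).
  have : tag u = J by apply: sameR; rewrite ?eu ?eu0 ?gF.
  by move/same_tag => [s es]; exists s; rewrite -eu es.
have [sp ep] : exists s, p = G s.
  have [w [rw wp]] := Hmiss _ rp.
  have [u eu] := preF _ pQ.
  have [uw euw] := preF _ (inQ _ rw).
  have : tag u = J.
    have -> : J = tag uw by apply: sameR; rewrite ?euw ?eu0 ?gF.
    apply: tagE; rewrite eu euw //; apply/negP => /Hrklt; rewrite rp rw; lia.
  by move/same_tag => [s es]; exists s; rewrite -eu es.
have [[Sirr Str] [[_ Santi]|[N [N1 [f [fbij [f1 [f2 [f3 _]]]]]]]]] := Hsec J (ltn_ord J).
  have [w [rw wp]] := Hbelow _ rp.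
  have [sw ew] := rankiG _ rw.
  by move: wp; rewrite ep ew Glt (negbTE (Santi _ _)).
case: fbij => finv fK fKi.
pose E (x : 'I_3 * 'I_N.+1) := G (f x).
have Einj : injective E by move=> x y /Ginj /(can_inj fK).
have Eof s : G s = E (finv s) by rewrite /E fKi.
have [[a0 k0] e0] : exists x, g (false,c0) = E x by have [s ->] := rankiG _ (gF c0); rewrite Eof; eexists.
have [[a1 k1] e1] : exists x, g (false,s3 c0) = E x by have [s ->] := rankiG _ (gF (s3 c0)); rewrite Eof; eexists.
have [[a2 k2] e2] : exists x, g (false,s3 (s3 c0)) = E x by have [s ->] := rankiG _ (gF (s3 (s3 c0))); rewrite Eof; eexists.
have [K HK] : exists K, forall a, rk (E (a,K)) = i.+1.
  have /and3P [d01 d02 d12] := s3_dist c0.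
  apply: (@core T lt lt_irr lt_trans rk i N E Einj _ _ _ Hrklt Hfar Hmiss Hbelow Hmiss1 Hmiss2
            a0 a1 a2 k0 k1 k2 _ _ _ _ _ _ _ (finv sp)).
  - by move=> a k l' kl; rewrite /E Glt f1.
  - by move=> a b k; rewrite /E Glt f2.
  - by move=> a b k l'; rewrite /E !Glt; apply: f3.
  - by rewrite -e0 -e1; apply: contra_neq d01 => /ginj [].
  - by rewrite -e0 -e2; apply: contra_neq d02 => /ginj [].
  - by rewrite -e1 -e2; apply: contra_neq d12 => /ginj [].
  - by rewrite -e0 gF.
  - by rewrite -e1 gF.
  - by rewrite -e2 gF.
  - move=> w /gF' [s ->]; rewrite -e0 -e1 -e2.
    by case: (cov3s s c0) => ->; [apply: Or31|apply: Or32|apply: Or33].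
  - by rewrite -Eof -ep.
pose Ss := [set E (a,K) | a : 'I_3].
pose Ys := [set g (true,t) | t : 'I_3].
have cS : #|Ss| = 3.
  rewrite card_imset ?card_ord // => a b /Einj [] //.
have SY : Ss \subset Ys.
  apply/subsetP => x /imsetP [a _ ->]; have [t ->] := gT' _ (HK a).
  by apply/imsetP; exists t.
have cY : #|Ys| <= 3 by rewrite -[X in _ <= X](card_ord 3); apply: leq_imset_card.
have eSY : Ss = Ys by apply/eqP; rewrite eqEcard SY cS.
have [t ->] := gT' _ rq.
have : g (true,t) \in Ss by rewrite eSY; apply/imsetP; exists t.
by move/imsetP => [a _ ->]; apply: GQ.
Qed.
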